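(* Let $\iota$ be a unimodal sp-implication, let $(\mathfrak F_i)_{i\in I}$ be a family of frames and $\mathfrak G$ a frame with $(\mathfrak F_i)_{i\in I}\gg\mathfrak G$. If $\mathfrak F_i$ validates $\iota$ for every $i\in I$, then $\mathfrak G$ validates $\iota$.
   Context: Unimodal setting: one diamond $\Diamond$; sp-formulas built from variables and $\top$ by $\wedge,\Diamond$; sp-implications $\sigma\to\tau$; frames $(W,R)$ with standard Kripke semantics, a frame validating $\sigma\to\tau$ if at every point of every model over it $\sigma$ implies $\tau$. A homomorphism $h:(W_1,R_1)\to(W_2,R_2)$ is a map with $(x,y)\in R_1\Rightarrow(h(x),h(y))\in R_2$. A finite tree is a finite frame $(T,R^{\mathfrak T})$ that is a directed tree (irreflexive, with a root from which every point is reached by a unique path). Let $\mathfrak F_i=(W_i,R_i)$ ($i\in I$), $\mathfrak G=(W,R^{\mathfrak G})$, $\mathfrak T=(T,R^{\mathfrak T})$ be frames, $w\in T$, $g_i:\mathfrak T\to\mathfrak F_i$ and $h:\mathfrak T\to\mathfrak G$ homomorphisms, and $Z\subseteq(\prod_{i\in I}W_i)\times W$. Write $(\mathfrak F_i,g_i)_{i\in I}\gg_Z(\mathfrak G,h,w)$ if: (s1) $((g_i(w))_{i\in I},h(w))\in Z$; (s2) for all $(\bar x,y)\in Z$ and $\bar x'=(x'_i)_{i\in I}\in\prod_iW_i$ with $(x_i,x'_i)\in R_i$ for all $i$, there is $y'$ with $(y,y')\in R^{\mathfrak G}$ and $(\bar x',y')\in Z$; (s3) for all $(\bar x,y)\in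 Z$ and $A\subseteq T$, if $x_i\in g_i[A]$ for all $i\in I$ then $y\in h[A]$. Write $(\mathfrak F_i)_{i\in I}\gg\mathfrak G$ if for every finite tree $\mathfrak T$ with root $w$ and every homomorphism $h:\mathfrak T\to\mathfrak G$ there exist homomorphisms $g_i:\mathfrak T\to\mathfrak F_i$ ($i\in I$) and $Z$ such that $(\mathfrak F_i,g_i)_{i\in I}\gg_Z(\mathfrak G,h,w)$. *)

(* Defs.v *)
From mathcomp Require Import all_boot.
Set Implicit Arguments. Unset Strict Implicit. Unset Printing Implicit Defensive.

Inductive spform : Type :=
| SVar : nat -> spform
| STop : spform
| SAnd : spform -> spform -> spform
| SDia : spform -> spform.

Fixpoint sat (W : Type) (R : W -> W -> Prop) (V : nat -> W -> Prop)
  (phi : spform) (x : W) : Prop :=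
  match phi with
  | SVar n => V n x
  | STop => True
  | SAnd a b => sat R V a x /\ sat R V b x
  | SDia a => exists y, R x y /\ sat R V a y
  end.

Definition validates (W : Type) (R : W -> W -> Prop) (sigma tau : spform) : Prop :=
  forall (V : nat -> W -> Prop) (x : W), sat R V sigma x -> sat R V tau x.

Definition frame_hom (W1 W2 : Type) (R1 : W1 -> W1 -> Prop)
  (R2 : W2 -> W2 -> Prop) (h : W1 -> W2) : Prop :=
  forall x y, R1 x y -> R2 (h x) (h y).

Definition is_tree_rooted (T : finType) (RT : rel T) (w : T) : Prop :=
  (forall x, ~~ RT x x) /\
  (forall x : T, exists s, path RT w s /\ last w s = x) /\
  (forall (x : T) (s1 s2 : seq T),
      path RT w s1 -> last w s1 = x ->
      path RT w s2 -> last w s2 = x -> s1 = s2).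

Definition sim_at (I : Type) (W : I -> Type) (R : forall i, W i -> W i -> Prop)
  (WG : Type) (RG : WG -> WG -> Prop) (T : finType)
  (g : forall i, T -> W i) (h : T -> WG) (w : T)
  (Z : (forall i, W i) -> WG -> Prop) : Prop :=
  (* (s1) *) Z (fun i => g i w) (h w) /\
  (* (s2) *) (forall (x : forall i, W i) (y : WG) (x' : forall i, W i),
                Z x y -> (forall i, R i (x i) (x' i)) ->
                exists y', RG y y' /\ Z x' y') /\
  (* (s3) *) (forall (x : forall i, W i) (y : WG) (A : T -> Prop),
                Z x y -> (forall i, exists a, A a /\ g i a = x i) ->
                exists a, A a /\ h a = y).

Definition gg (I : Type) (W : I -> Type) (R : forall i, W i -> W i -> Prop)
  (WG : Type) (RG : WG -> WG -> Prop) : Prop :=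
  forall (T : finType) (RT : rel T) (w : T),
    is_tree_rooted RT w ->
    forall h : T -> WG, frame_hom (fun a b => RT a b) RG h ->
    exists (g : forall i, T -> W i) (Z : (forall i, W i) -> WG -> Prop),
      (forall i, frame_hom (fun a b => RT a b) (R i) (g i)) /\
      sim_at R RG g h w Z.

(* Main.v *)
Require Import Defs.
From mathcomp Require Import all_boot.
From Stdlib Require Import ClassicalEpsilon.

Definition step (d : nat) (phi : spform) : option spform :=
  match d, phi with
  | 0, SAnd a _ => Some a
  | 1, SAnd _ b => Some b
  | 2, SDia a => Some a
  | _, _ => None
  end.

Fixpoint subf (phi : spform) (s : seq nat) : option spform :=
  match s with [::] => Some phi | d :: s' => obind (step d) (subf phi s') end.

Fixpoint nd (s : seq nat) : seq nat :=
  match s with [::] => [::] | d :: s' => if d == 2 then s else nd s' end.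

Fixpoint pos (phi : spform) : seq (seq nat) :=
  [::] :: match phi with
  | SAnd a b => map (rcons^~ 0) (pos a) ++ map (rcons^~ 1) (pos b)
  | SDia a => map (rcons^~ 2) (pos a)
  | _ => [::] end.

Lemma subf_rcons phi s d :
  subf phi (rcons s d) = obind (fun psi => subf psi s) (step d phi).
Proof.
elim: s => [|e s IH] /=; first by case: (step d phi).
by rewrite IH; case: (step d phi).
Qed.

Lemma pos_complete phi s : isSome (subf phi s) -> s \in pos phi.
Proof.
elim: phi s => [n||a IHa b IHb|a IHa] s; case/lastP: s => [|s d];
  rewrite ?in_cons ?eqxx //= subf_rcons; case: d => [|[|[|d]]] //= H.
- by rewrite mem_cat (map_f _ (IHa _ H)) orbT.
- by rewrite mem_cat (map_f _ (IHb _ H)) !orbT.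
- by rewrite (map_f _ (IHa _ H)) orbT.
Qed.

Lemma subf_cons_valid phi d s : isSome (subf phi (d :: s)) -> isSome (subf phi s).
Proof. by rewrite /=; case: (subf phi s). Qed.

Lemma nd_valid phi s : isSome (subf phi s) -> isSome (subf phi (nd s)).
Proof.
elim: s => [|d s IH] //= H; case: ifP => _ //; apply: IH; exact: subf_cons_valid H.
Qed.

Lemma nd_idem s : nd (nd s) = nd s.
Proof. by elim: s => [|d s IH] //=; case: ifP => //= ->. Qed.

Lemma size_nd s : size (nd s) <= size s.
Proof. elim: s => [|d s IH] //=; case: ifP => // _; exact: leqW. Qed.

Section FG.
Variables (WG : Type) (RG : WG -> WG -> Prop) (V : nat -> WG -> Prop)
  (sigma : spform) (x : WG).
Hypothesis Hx : sat RG V sigma x.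

Fixpoint f (s : seq nat) : WG :=
  match s with
  | [::] => x
  | d :: s' => if d == 2 then
      epsilon (inhabits x) (fun y => RG (f s') y /\
         forall psi, subf sigma (2 :: s') = Some psi -> sat RG V psi y)
    else f s'
  end.

Lemma f_spec s psi : subf sigma (2 :: s) = Some psi ->
  sat RG V (SDia psi) (f s) ->
  RG (f s) (f (2 :: s)) /\ sat RG V psi (f (2 :: s)).
Proof.
move=> Hs [y [Ry Sy]] /=.
have := epsilon_spec (inhabits x) (fun y => RG (f s) y /\
         forall psi, subf sigma (2 :: s) = Some psi -> sat RG V psi y).
case.
  by exists y; split => // psi' ; rewrite Hs => -[<-].
by move=> H1 H2; split => //; apply: H2.
Qed.

Lemma f_sat s psi : subf sigma s = Some psi -> sat RG V psi (f s).
Proof.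
elim: s psi => [|d s IH] psi; first by case=> <-.
move=> Hs.
have : exists phi0, subf sigma s = Some phi0 /\ step d phi0 = Some psi.
  by move: Hs => /=; case: (subf sigma s) => //= phi0 ?; exists phi0.
case=> phi0 [E St]; have S0 := IH _ E.
case: d St Hs => [|[|[|d]]] //; case: phi0 E S0 => //.
- by move=> a b _ [] ? _ [<-] _.
- by move=> a b _ [] _ ? [<-] _.
- move=> a E S0 [Ea] Hs; subst a; exact: (proj2 (@f_spec s psi Hs S0)).
Qed.

Lemma f_nd s : f (nd s) = f s.
Proof. by elim: s => [|d s IH] //=; case: eqP => [->|_]. Qed.

Lemma f_step t : isSome (subf sigma (2 :: t)) -> RG (f t) (f (2 :: t)).
Proof.
move=> H.
have [a E] : exists a, subf sigma t = Some (SDia a).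
  by move: H => /=; case: (subf sigma t) => // -[]//= a _; exists a.
have S := @f_sat t _ E.
have Hs : subf sigma (2 :: t) = Some a by rewrite /= E.
exact: (proj1 (@f_spec t a Hs S)).
Qed.
End FG.

Section Tree.
Variable sigma : spform.

Definition ndlist := [seq s <- pos sigma | (nd s == s) && isSome (subf sigma s)].
Definition TT : finType := seq_sub ndlist.

Lemma ndlistP s : (s \in ndlist) = (nd s == s) && isSome (subf sigma s).
Proof.
rewrite mem_filter; apply/andP/idP => [[]//|H]; split => //.
by apply: pos_complete; case/andP: H.
Qed.

Lemma root_in : [::] \in ndlist.
Proof. by rewrite ndlistP. Qed.

Definition rootT : TT := SeqSub root_in.
Definition toT (s : seq nat) : TT := insubd rootT s.

Lemma toT_val s : s \in ndlist -> val (toT s) = s.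
Proof. by rewrite /toT val_insubd => ->. Qed.

Lemma memT (a : TT) : val a \in ndlist.
Proof. exact: ssvalP. Qed.

Definition RT : rel TT := fun a b => (val b != [::]) && (val a == nd (behead (val b))).

Lemma nd_in s : isSome (subf sigma s) -> nd s \in ndlist.
Proof. by move=> H; rewrite ndlistP nd_idem eqxx nd_valid. Qed.

Lemma tree : is_tree_rooted RT rootT.
Proof.
split; [|split].
- move=> a; rewrite /RT; apply/negP => /andP[ne /eqP e].
  case: (val a) e ne => [|d t] //= e _.
  by have := size_nd t; rewrite -e /= ltnn.
- move=> a.
  have [n Hn] : exists n, size (val a) <= n by exists (size (val a)).
  elim: n a Hn => [|n IH] a Hn.
    exists [::]; split => //=; apply: val_inj.
    by move: Hn; rewrite leqn0 size_eq0 => /eqP ->.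
  case Ea: (val a) => [|d t].
    by exists [::]; split => //=; apply: val_inj; rewrite Ea.
  have Va : isSome (subf sigma t).
    by have := memT a; rewrite ndlistP Ea => /andP[_]; apply: subf_cons_valid.
  have Vp := @toT_val _ (@nd_in t Va).
  have [s [Ps Ls]] : exists s, path RT rootT s /\ last rootT s = toT (nd t).
    apply: IH; rewrite Vp; move: Hn; rewrite Ea /=.
    by move/(leq_trans (leq_ltn_trans (size_nd t) (ltnSn _))).
  exists (rcons s a); rewrite rcons_path last_rcons Ps Ls; split => //.
  by rewrite /RT Ea Vp /= eqxx.
- move=> x s1 s2; elim/last_ind: s1 s2 x => [|s1 y1 IH] s2 x;
    case/lastP: s2 => [|s2 y2] //.
  + move=> _ /= <-; rewrite rcons_path last_rcons => /andP[_ /andP[ne _]] e.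
    by move: ne; rewrite e.
  + rewrite rcons_path last_rcons => /andP[_ /andP[ne _]] e _ /= e2.
    by move: ne; rewrite e -e2.
  + rewrite !rcons_path !last_rcons => /andP[P1 R1] e1 /andP[P2 R2] e2.
    subst.
    have E : last rootT s1 = last rootT s2.
      by apply: val_inj; move: R1 R2 => /andP[_ /eqP ->] /andP[_ /eqP ->].
    by rewrite (IH s2 (last rootT s1)) // E.
Qed.
End Tree.

Theorem theorem9p1 (I : Type) (W : I -> Type) (R : forall i, W i -> W i -> Prop)
  (WG : Type) (RG : WG -> WG -> Prop) (sigma tau : spform) :
  gg R RG ->
  (forall i, validates (R i) sigma tau) ->
  validates RG sigma tau.
Proof.
move=> Hgg Hval V x Hx.
have hom : frame_hom (fun a b => RT sigma a b) RG (fun a => @f WG RG V sigma x (val a)).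
  move=> a b /andP[ne /eqP e].
  have := @memT sigma b; rewrite ndlistP => /andP[/eqP nb vb].
  move: ne nb vb e; case: (val b) => [|d t] // _.
  move=> nb vb e; have [E2|ne2] := eqVneq d 2.
    subst d; rewrite e f_nd; exact: f_step.
  rewrite /= (negbTE ne2) in nb.
  by have := size_nd t; rewrite nb /= ltnn.
have [g [Z [Hg [S1 [S2 S3]]]]] :=
  Hgg (TT sigma) (RT sigma) (rootT sigma) (tree sigma) _ hom.
pose Vi i n z := exists a, (exists s, subf sigma s = Some (SVar n) /\
                              toT sigma (nd s) = a) /\ g i a = z.
have Fsat : forall i psi s, subf sigma s = Some psi ->
    sat (R i) (Vi i) psi (g i (toT sigma (nd s))).
  move=> i psi; elim: psi => [n||a IHa b IHb|a IHa] s E /=.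
  - by exists (toT sigma (nd s)); split => //; exists s.
  - by [].
  - have H0 : subf sigma (0 :: s) = Some a by rewrite /= E.
    have H1 : subf sigma (1 :: s) = Some b by rewrite /= E.
    by split; [exact: IHa _ H0 | exact: IHb _ H1].
  - have H2 : subf sigma (2 :: s) = Some a by rewrite /= E.
    exists (g i (toT sigma (2 :: s))); split; last exact: IHa _ H2.
    have N1 : nd s \in ndlist sigma by apply: nd_in; rewrite E.
    have N2 : 2 :: s \in ndlist sigma by rewrite ndlistP H2 /= eqxx.
    by apply: Hg; rewrite /RT !toT_val //= eqxx.
have Fi : forall i, sat (R i) (Vi i) sigma (g i (rootT sigma)).
  move=> i.
  have -> : rootT sigma = toT sigma (nd [::]).
    by apply: val_inj; rewrite toT_val //; exact: root_in.
  exact: Fsat.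
have main : forall phi xb y, Z xb y ->
    (forall i, sat (R i) (Vi i) phi (xb i)) -> sat RG V phi y.
  elim=> [n||a IHa b IHb|a IHa] xb y HZ H /=.
  - have [a [[s [Es Ea]] Ha]] := S3 xb y _ HZ H.
    rewrite -Ha -Ea /= toT_val; last by apply: nd_in; rewrite Es.
    rewrite f_nd; exact: (@f_sat _ _ _ _ _ Hx _ _ Es).
  - by [].
  - by split; [apply: (IHa xb y HZ) => i; exact: (H i).1
              | apply: (IHb xb y HZ) => i; exact: (H i).2].
  - pose x' i := epsilon (inhabits (xb i))
        (fun z => R i (xb i) z /\ sat (R i) (Vi i) a z).
    have Hx' : forall i, R i (xb i) (x' i) /\ sat (R i) (Vi i) a (x' i).
      move=> i; exact: (epsilon_spec _ _ (H i)).
    have [y' [Ry' Zy']] := S2 xb y x' HZ (fun i => (Hx' i).1).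
    exists y'; split => //; apply: (IHa x' y' Zy') => i; exact: (Hx' i).2.
exact: (main tau _ _ S1 (fun i => Hval i _ _ (Fi i))).
Qed.
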